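(* Let $\mu$ be an absolutely continuous probability measure on $\mathbb{R}^d$ with density $f_\mu$ satisfying (B1), (B2) and (B3) below. Then there is a constant $C>0$ (independent of $\mathbf g,\mathbf g'$ and $i$) such that for all $\mathbf g,\mathbf g'\in\mathbb{R}^M$ and all $i\in\{1,\dots,M\}$, $$\mu\big(\mathbb L_i(\mathbf g)\setminus\mathbb L_i(\mathbf g')\big)\le C\,M\,\|\mathbf g-\mathbf g'\|_\infty .$$
   Context: $\nu=\sum_{i=1}^Mw_i\delta_{y_i}$ with distinct $y_i\in\mathbb{R}^d$, $w_i>0$, $\sum w_i=1$, $w_{\min}=\min w_i$. (PW): a probability measure $\rho$ satisfies it if $\exists C_{pw}$ with $\|f-\mathbb{E}_\rho f\|_{L^1(\rho)}\le C_{pw}\|\nabla f\|_{L^1(\rho)}$ for all $f\in C^1(\mathbb{R}^d)$. (B1): the cost is $c(x,y)=\frac12\|x-y\|^2$ and $\mu$ has finite second moment. (B2): there is a compact $K'$ with $\mu(K')\ge1-\frac14w_{\min}$ such that the probability measure with density $f_\mu\mathbf 1_{K'}/\mu(K')$ satisfies (PW). (B3): with $f_\mu^{R+0}=f_\mu\mathbf 1_{\{\|x\|\le R\}}$, $f_\mu^{R+r}=f_\mu\mathbf 1_{\{R+r-2\le\|x\|\le R+r\}}$ for $r\ge1$, $C_{f_\mu}^{R+r}=\sup f_\mu^{R+r}$, $\omega_{f_\mu}^{R+r}$ the modulus of continuity of $f_\mu^{R+r}$: there exist $R>1$, $C>0$, a modulus $\omega$ with $\sum_{r\ge0}(R+r)^{d-1}\omega_{f_\mu}^{R+r}(\delta)\le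 C\omega(\delta)$ $\forall\delta>0$ and $\sum_{r\ge0}(R+r)^{d-1}C_{f_\mu}^{R+r}<\infty$. $\mathbf g^c(x)=\min_i\{c(x,y_i)-g_i\}$; Laguerre cells $\mathbb L_j(\mathbf g)=\{x:\mathbf g^c(x)=c(x,y_j)-g_j\}$. *)

(* Defs.v *)
From HB Require Import structures.
From mathcomp Require Import all_boot all_order all_algebra.
From mathcomp Require Import all_classical all_reals all_analysis.
Set Implicit Arguments. Unset Strict Implicit. Unset Printing Implicit Defensive.
Import Order.TTheory GRing.Theory Num.Theory.
Import numFieldNormedType.Exports.
Local Open Scope classical_set_scope.
Local Open Scope ring_scope.

(* R^d is represented by row vectors 'rV[R]_d (normed/topological     *)
(* structure from MathComp-Analysis).  We equip it with the product   *)
(* (= Borel) sigma-algebra generated by the coordinate maps.          *)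
Section rV_measurable.
Context {R : realType} (n : nat).
Let coord : 'I_n -> 'rV[R]_n -> R := fun i x => x ord0 i.

Let rV_set0 : g_sigma_preimage coord set0.
Proof. exact: sigma_algebra0. Qed.
Let rV_setC A : g_sigma_preimage coord A -> g_sigma_preimage coord (~` A).
Proof. exact: sigma_algebraC. Qed.
Let rV_bigcup (F : _^nat) : (forall i, g_sigma_preimage coord (F i)) ->
  g_sigma_preimage coord (\bigcup_i (F i)).
Proof. exact: sigma_algebra_bigcup. Qed.

HB.instance Definition _ := @isMeasurable.Build default_measure_display
  'rV[R]_n (g_sigma_preimage coord) rV_set0 rV_setC rV_bigcup.
End rV_measurable.

Section Defs.
Context {R : realType} {d : nat}.

Definition enorm (x : 'rV[R]_d) : R := Num.sqrt (\sum_(i < d) x ord0 i ^+ 2).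

Definition box (a b : 'rV[R]_d) : set 'rV[R]_d :=
  [set x | forall i, a ord0 i <= x ord0 i <= b ord0 i].

(* lam is (the Borel restriction of) the Lebesgue measure on R^d:
   it gives every closed box its volume; this determines it uniquely. *)
Definition is_lebesgue (lam : {measure set 'rV[R]_d -> \bar R}) : Prop :=
  forall a b : 'rV[R]_d, (forall i, a ord0 i <= b ord0 i) ->
    lam (box a b) = (\prod_(i < d) (b ord0 i - a ord0 i))%:E.

Definition dmeasure (lam : {measure set 'rV[R]_d -> \bar R}) (f : 'rV[R]_d -> R)
  (A : set 'rV[R]_d) : \bar R := (\int[lam]_(x in A) (f x)%:E)%E.

Definition is_density (lam : {measure set 'rV[R]_d -> \bar R}) (f : 'rV[R]_d -> R) :=
  measurable_fun setT f /\ (forall x, 0 <= f x) /\ dmeasure lam f setT = 1%E.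

Definition basis_vec (i : 'I_d) : 'rV[R]_d := delta_mx ord0 i.
Definition grad (g : 'rV[R]_d -> R) (x : 'rV[R]_d) : 'rV[R]_d :=
  \row_i ('D_(basis_vec i) g x).

Definition C1 (g : 'rV[R]_d -> R) : Prop :=
  forall i, (forall x, derivable g x (basis_vec i)) /\
            continuous (fun x => 'D_(basis_vec i) g x).

(* (PW) for the probability measure rho with density f 1_K / mu(K):
   || g - E_rho g ||_{L^1(rho)} <= C_pw || grad g ||_{L^1(rho)} *)
Definition PW_restricted (lam : {measure set 'rV[R]_d -> \bar R}) (f : 'rV[R]_d -> R)
  (K : set 'rV[R]_d) : Prop :=
  let mK := Rintegral lam K f in
  let rho_int (h : 'rV[R]_d -> R) := Rintegral lam K (fun x => h x * f x / mK) in
  exists Cpw : R, forall g : 'rV[R]_d -> R, C1 g ->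
    rho_int (fun x => `|g x - rho_int g|) <= Cpw * rho_int (fun x => enorm (grad g x)).

Definition cost (x y : 'rV[R]_d) : R := (enorm (x - y)) ^+ 2 / 2.

(* g^c(x) = min_j { c(x,y_j) - g_j }  (computed in \bar R; M >= 1 in use) *)
Definition ctransform (M : nat) (y : 'I_M -> 'rV[R]_d) (g : 'I_M -> R)
  (x : 'rV[R]_d) : \bar R :=
  (\big[Order.min/+oo]_(j < M) ((cost x (y j) - g j)%:E))%E.

Definition laguerre (M : nat) (y : 'I_M -> 'rV[R]_d) (g : 'I_M -> R) (i : 'I_M) :
  set 'rV[R]_d := [set x | ctransform y g x = (cost x (y i) - g i)%:E].

Definition supnorm (M : nat) (g : 'I_M -> R) : R := \big[Num.max/0]_(i < M) `|g i|.

(* w_min (weights are in (0,1], so the neutral 1 is harmless) *)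
Definition wmin (M : nat) (w : 'I_M -> R) : R := \big[Num.min/1]_(i < M) w i.

Definition f_piece (f : 'rV[R]_d -> R) (Rr : R) (r : nat) (x : 'rV[R]_d) : R :=
  if r == 0%N then (if enorm x <= Rr then f x else 0)
  else (if (Rr + r%:R - 2 <= enorm x) && (enorm x <= Rr + r%:R) then f x else 0).

Definition sup_fun (h : 'rV[R]_d -> R) : \bar R := ereal_sup (range (fun x => (h x)%:E)).

Definition modcont (h : 'rV[R]_d -> R) (delta : R) : \bar R :=
  ereal_sup [set e | exists x z : 'rV[R]_d, enorm (x - z) <= delta /\ e = (`|h x - h z|)%:E].

End Defs.

Definition is_modulus {R : realType} (om : R -> R) : Prop :=
  (forall t, 0 < t -> 0 <= om t) /\
  (forall s t, 0 < s -> s <= t -> om s <= om t) /\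
  (om @ at_right 0 --> 0).

(* Main.v *)
Require Import Defs.
From HB Require Import structures.
From mathcomp Require Import all_boot all_order all_algebra.
From mathcomp Require Import all_classical all_reals all_analysis.
Import Order.TTheory GRing.Theory Num.Theory.
Import numFieldNormedType.Exports.
Import measurable_realfun.
From mathcomp Require Import ring lra.
Local Open Scope classical_set_scope.
Local Open Scope ring_scope.

Section Meas.
Context {R : realType} {d : nat}.
Local Notation V := ('rV[R]_d).

Lemma coord_meas (i : 'I_d) :
  measurable_fun [set: V] (fun x : V => x ord0 i).
Proof.
move=> _ B mB; rewrite setTI.
apply: sub_sigma_algebra.
have : i \in index_enum 'I_d by rewrite mem_index_enum.
elim: (index_enum 'I_d) => [//|j s IH]; rewrite inE big_cons => /orP[/eqP<-|/IH h].
  by left; exists B => //; rewrite setTI.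
by right.
Qed.

Lemma lin_meas (v : V) :
  measurable_fun [set: V] (fun x : V => \sum_(l < d) v ord0 l * x ord0 l).
Proof.
apply: measurable_sum => l.
exact: measurable_funM (measurable_cst _) (coord_meas l).
Qed.

Lemma box_meas (a b : V) : measurable (box a b).
Proof.
have -> : box a b = \bigcap_(i in [set: 'I_d])
   ((fun x : V => x ord0 i) @^-1` `[a ord0 i, b ord0 i]).
  apply/seteqP; split => x /=.
    by move=> h i _ /=; rewrite in_itv /=; exact: h.
  by move=> h i; have := h i I; rewrite /= in_itv.
apply: fin_bigcap_measurable; first exact: finite_finset.
move=> i _; rewrite -[X in measurable X]setTI.
exact: coord_meas.
Qed.

Lemma slab_meas (v : V) (a b : R) :
  measurable [set x : V | a < \sum_(l < d) v ord0 l * x ord0 l <= b].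
Proof.
have -> : [set x : V | a < \sum_(l < d) v ord0 l * x ord0 l <= b] =
  [set: V] `&` (fun x : V => \sum_(l < d) v ord0 l * x ord0 l) @^-1` `]a, b].
  by apply/seteqP; split => x /=; rewrite in_itv /=; [move=> h; split|case].
exact: lin_meas.
Qed.

End Meas.
Section Geo.
Context {R : realType} {d : nat}.
Local Notation V := ('rV[R]_d).
Variable lam : {measure set V -> \bar R}.
Hypothesis hlam : is_lebesgue lam.
Variables (v : V) (k : 'I_d).
Hypothesis vk : v ord0 k != 0.
Variables (a b : R).
Hypothesis ab : a <= b.

Definition linf (x : V) : R := \sum_(l < d) v ord0 l * x ord0 l.
Definition slab := [set x : V | a < linf x <= b].
Definition Vp (p q : V) : R := \prod_(l < d | l != k) (q ord0 l - p ord0 l).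
Definition Ep (p q : V) : R := \sum_(l < d | l != k) `|v ord0 l| * (q ord0 l - p ord0 l).
Definition Claim (th : R) := forall p q : V, (forall i, p ord0 i <= q ord0 i) ->
  (lam (slab `&` box p q) <= (Vp p q * ((b - a) + th * Ep p q) / `|v ord0 k|)%:E)%E.

Lemma Vp_ge0 (p q : V) : (forall i, p ord0 i <= q ord0 i) -> 0 <= Vp p q.
Proof. by move=> pq; apply: prodr_ge0 => l _; rewrite subr_ge0. Qed.
Lemma Ep_ge0 (p q : V) : (forall i, p ord0 i <= q ord0 i) -> 0 <= Ep p q.
Proof. by move=> pq; apply: sumr_ge0 => l _; rewrite mulr_ge0 // subr_ge0. Qed.

Lemma claim1 : Claim 1.
Proof.
move=> p q pq; have ab0 := ab.
have E0 : (0:R) <= Ep p q := @Ep_ge0 p q pq.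
set E := Ep p q in E0 *.
pose c l := (p ord0 l + q ord0 l) / 2.
pose t := ((a + b) / 2 - \sum_(l < d | l != k) v ord0 l * c l) / v ord0 k.
pose ell := ((b - a) + E) / (2 * `|v ord0 k|).
have vk0 : 0 < `|v ord0 k| by rewrite normr_gt0.

have ell0 : 0 <= ell.
  apply: divr_ge0; lra.
pose p' : V := \row_l (if l == k then t - ell else p ord0 l).
pose q' : V := \row_l (if l == k then t + ell else q ord0 l).
have p'q' : forall i, p' ord0 i <= q' ord0 i.
  by move=> i; rewrite !mxE; case: ifP => _; [lra|exact: pq].
have sub : slab `&` box p q `<=` box p' q'.
  move=> x [/andP[ax xb] xpq] i; rewrite !mxE; case: ifPn => [/eqP->|_]; last exact: xpq.
  rewrite -ler_distl.
  have hT : linf x = v ord0 k * x ord0 k + \sum_(l < d | l != k) v ord0 l * x ord0 l.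
    by rewrite /linf (bigD1 k).
  set dl := \sum_(l < d | l != k) v ord0 l * (x ord0 l - c l).
  have hdl : dl = \sum_(l < d | l != k) v ord0 l * x ord0 l -
                  \sum_(l < d | l != k) v ord0 l * c l.
    by rewrite /dl -sumrB; apply: eq_bigr => l _; rewrite mulrBr.
  have dlE : `|dl| <= E / 2.
    apply: le_trans (ler_norm_sum _ _ _) _.
    rewrite /E /Ep mulr_suml; apply: ler_sum => l _.
    rewrite normrM -mulrA ler_wpM2l //.
    have := xpq l; rewrite /c => /andP[h1 h2].
    rewrite ler_norml; apply/andP; split; lra.
  have vt : v ord0 k * t = (a + b) / 2 - \sum_(l < d | l != k) v ord0 l * c l.
    by rewrite /t mulrC divfK.
  have key : v ord0 k * (x ord0 k - t) = (linf x - (a + b) / 2) - dl.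
    by rewrite mulrBr vt hT hdl; ring.
  have : `|v ord0 k| * `|x ord0 k - t| <= ((b - a) + E) / 2.
    rewrite -normrM key.
    apply: le_trans (ler_normB _ _) _.
    have : `|linf x - (a + b) / 2| <= (b - a) / 2.
      by rewrite ler_norml; apply/andP; split; lra.
    lra.
  rewrite /ell => h.
  rewrite ler_pdivlMr; last lra.
  rewrite mulrC -mulrA.
  rewrite -ler_pdivlMl; last lra.
  by apply: (le_trans h); rewrite mulrC.
apply: le_trans (le_measure _ _ _ sub) _.
- rewrite inE; apply: measurableI; [exact: slab_meas|exact: box_meas].
- by rewrite inE; exact: box_meas.
apply: (@le_trans _ _ (lam (box p' q'))); first exact: lexx.
rewrite (hlam _ _ p'q') lee_fin (bigD1 k) //= !mxE eqxx.
have -> : \prod_(i < d | i != k) (q' ord0 i - p' ord0 i) = Vp p q.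
  by apply: eq_bigr => i /negbTE ik; rewrite !mxE ik.
rewrite /ell mul1r.
have : Vp p q * (b - a + E) / `|v ord0 k| = (t + (b - a + E) / (2 * `|v ord0 k|) - (t - (b - a + E) / (2 * `|v ord0 k|))) * Vp p q.
  field; lra.
by move=> ->.
Qed.


Lemma claim_step th : 0 <= th -> Claim th ->
  Claim (th * (1 - (2 * d%:R)^-1)).
Proof.
move=> th0 hth p q pq; have ab0 := ab.
have vk0 : 0 < `|v ord0 k| by rewrite normr_gt0.
case: (pickP (fun l => l != k)) => [l0 l0k|none]; last first.
  apply: le_trans (hth p q pq) _.
  have -> : Ep p q = 0 by rewrite /Ep big_pred0.
  by rewrite !mulr0.
pose F l : R := `|v ord0 l| * (q ord0 l - p ord0 l).
case: (@arg_maxP _ _ _ l0 [pred j | j != k] F l0k) => l lk lmax.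
have F0 : forall j, 0 <= F j by move=> j; rewrite /F mulr_ge0 // subr_ge0.
have dpos : (0 < d)%N by case: (d) k => [[]|].
have dR : (0:R) < d%:R by rewrite ltr0n.
have EdF : Ep p q <= d%:R * F l.
  apply: (@le_trans _ _ (\sum_(j < d | j != k) F l)).
    by apply: ler_sum => j jk; exact: lmax.
  apply: (@le_trans _ _ (\sum_(j < d) F l)).
    rewrite [X in _ <= X](bigID (fun j => j != k)) /= lerDl.
    by apply: sumr_ge0 => j _.
  by rewrite sumr_const card_ord mulr_natl.
pose m := (p ord0 l + q ord0 l) / 2.
pose q1 : V := \row_j (if j == l then m else q ord0 j).
pose p2 : V := \row_j (if j == l then m else p ord0 j).
have pl := pq l.
have pq1 : forall i, p ord0 i <= q1 ord0 i.
  by move=> i; rewrite !mxE; case: ifP => [/eqP->|_]; [rewrite /m; lra|exact: pq].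
have p2q : forall i, p2 ord0 i <= q ord0 i.
  by move=> i; rewrite !mxE; case: ifP => [/eqP->|_]; [rewrite /m; lra|exact: pq].
have sub : slab `&` box p q `<=` (slab `&` box p q1) `|` (slab `&` box p2 q).
  move=> x [sx bx]; have := bx l; case/andP=> h1 h2.
  case: (lerP (x ord0 l) m) => hm; [left|right]; split => // i; rewrite !mxE;
    case: ifPn => [/eqP->|_]; try exact: bx.
  - by rewrite h1.
  - by rewrite h2 ltW.
have mS : forall p q : V, measurable (slab `&` box p q).
  by move=> p' q'; apply: measurableI; [exact: slab_meas|exact: box_meas].
apply: le_trans (le_measure _ _ _ sub) _.
- by rewrite inE.
- by rewrite inE; apply: measurableU.
apply: le_trans (measureU2 _ (mS _ _) (mS _ _)) _.
apply: le_trans (leeD (hth _ _ pq1) (hth _ _ p2q)) _.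
rewrite -EFinD lee_fin.
pose P := q ord0 l - p ord0 l.
pose X := \prod_(j < d | (j != k) && (j != l)) (q ord0 j - p ord0 j).
pose Er := \sum_(j < d | (j != k) && (j != l)) `|v ord0 j| * (q ord0 j - p ord0 j).
have X0 : 0 <= X by apply: prodr_ge0 => j _; rewrite subr_ge0.
have Er0 : 0 <= Er by apply: sumr_ge0 => j _; rewrite mulr_ge0 // subr_ge0.
have P0 : 0 <= P by rewrite /P subr_ge0.
have hV : Vp p q = P * X by rewrite /Vp (bigD1 l).
have hV1 : Vp p q1 = P / 2 * X.
  rewrite /Vp (bigD1 l) //= !mxE eqxx; congr (_ * _).
    by rewrite /P /m; field.
  by apply: eq_bigr => j /andP[_ /negbTE jl]; rewrite !mxE jl.
have hV2 : Vp p2 q = P / 2 * X.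
  rewrite /Vp (bigD1 l) //= !mxE eqxx; congr (_ * _).
    by rewrite /P /m; field.
  by apply: eq_bigr => j /andP[_ /negbTE jl]; rewrite !mxE jl.
have hE : Ep p q = F l + Er by rewrite /Ep (bigD1 l).
have hE1 : Ep p q1 = F l / 2 + Er.
  rewrite /Ep (bigD1 l) //= !mxE eqxx; congr (_ + _).
    by rewrite /F /m; field.
  by apply: eq_bigr => j /andP[_ /negbTE jl]; rewrite !mxE jl.
have hE2 : Ep p2 q = F l / 2 + Er.
  rewrite /Ep (bigD1 l) //= !mxE eqxx; congr (_ + _).
    by rewrite /F /m; field.
  by apply: eq_bigr => j /andP[_ /negbTE jl]; rewrite !mxE jl.
rewrite hV hV1 hV2 hE1 hE2 hE.
set Fl := F l in EdF hE *.
have Fl0 : 0 <= Fl := F0 l.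
have h1 : Fl / 2 + Er <= (1 - (2 * d%:R)^-1) * (Fl + Er).
  have h2 : (Fl + Er) / (2 * d%:R) <= Fl / 2.
    rewrite ler_pdivrMr; last by rewrite mulr_gt0.
    have -> : Fl / 2 * (2 * d%:R) = d%:R * Fl by field.
    by rewrite -hE.
  have -> : (1 - (2 * d%:R)^-1) * (Fl + Er) = Fl + Er - (Fl + Er) / (2 * d%:R).
    by field; rewrite gt_eqF // mulr_gt0.
  lra.
have -> : P / 2 * X * (b - a + th * (Fl / 2 + Er)) / `|v ord0 k| +
  P / 2 * X * (b - a + th * (Fl / 2 + Er)) / `|v ord0 k| =
  (P * X / `|v ord0 k|) * (b - a + th * (Fl / 2 + Er)).
  by field; rewrite gt_eqF.
have -> : P * X * (b - a + th * (1 - (2 * d%:R)^-1) * (Fl + Er)) / `|v ord0 k| =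
  (P * X / `|v ord0 k|) * (b - a + th * ((1 - (2 * d%:R)^-1) * (Fl + Er))).
  by field; rewrite !gt_eqF.
apply: ler_wpM2l; first by rewrite divr_ge0 // mulr_ge0.
by rewrite lerD2l ler_wpM2l.
Qed.

Lemma claim_all n : Claim ((1 - (2 * d%:R)^-1) ^+ n).
Proof.
have dpos : (0 < d)%N by case: (d) k => [[]|].
have r0 : 0 <= 1 - (2 * d%:R)^-1 :> R.
  rewrite subr_ge0 invf_le1 ?mulr_gt0 ?ltr0n //.
  have : (1:R) <= d%:R by rewrite ler1n.
  lra.
elim: n => [|n IH]; first by rewrite expr0; exact: claim1.
by rewrite exprSr; apply: claim_step => //; exact: exprn_ge0.
Qed.

Lemma slab_box (p q : V) : (forall i, p ord0 i <= q ord0 i) ->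
  (lam (slab `&` box p q) <= (Vp p q * (b - a) / `|v ord0 k|)%:E)%E.
Proof.
move=> pq; have ab0 := ab.
have dpos : (0 < d)%N by case: (d) k => [[]|].
have vk0 : 0 < `|v ord0 k| by rewrite normr_gt0.
pose r : R := 1 - (2 * d%:R)^-1.
have r0 : 0 <= r.
  rewrite subr_ge0 invf_le1 ?mulr_gt0 ?ltr0n //.
  have : (1:R) <= d%:R by rewrite ler1n.
  lra.
have r1 : `|r| < 1.
  rewrite ger0_norm // /r ltrBlDr ltrDl invr_gt0 mulr_gt0 ?ltr0n //.
have h0 := claim_all 0 _ _ pq.
have lam0 : (0 <= lam (slab `&` box p q))%E by exact: measure_ge0.
have finl : lam (slab `&` box p q) \is a fin_num.
  by rewrite ge0_fin_numE //; apply: le_lt_trans h0 _; rewrite ltry.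
rewrite -(fineK finl) lee_fin.
pose u n := Vp p q * ((b - a) + r ^+ n * Ep p q) / `|v ord0 k|.
have cu : u n @[n --> \oo] --> Vp p q * ((b - a) + 0 * Ep p q) / `|v ord0 k|.
  apply: cvgMr_tmp; apply: cvgMl_tmp; apply: cvgD; first exact: cvg_cst.
  by apply: cvgMr_tmp; exact: cvg_expr.
rewrite mul0r addr0 in cu.
rewrite -(cvg_lim _ cu) //; apply: limr_ge; first by apply/cvg_ex; eexists; exact: cu.
apply: nearW => n; rewrite -lee_fin (fineK finl); exact: claim_all _ _ _ pq.
Qed.

End Geo.

Section Dens.
Context {R : realType} {d : nat}.
Local Notation V := ('rV[R]_d).
Variable lam : {measure set V -> \bar R}.
Variable f : V -> R.
Hypothesis fm : measurable_fun [set: V] f.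
Hypothesis f0 : forall x, 0 <= f x.
Variable Rr : R.
Hypothesis Rr1 : 1 < Rr.
Hypothesis Hfin : (\sum_(0 <= r <oo) (((Rr + r%:R) ^+ d.-1)%:E * sup_fun (f_piece f Rr r)) < +oo)%E.

Definition sr r : \bar R := sup_fun (f_piece f Rr r).
Definition cube (r : nat) : set V := box (const_mx (- (Rr + r%:R))) (const_mx (Rr + r%:R)).

Lemma fpiece_ge0 r x : 0 <= f_piece f Rr r x.
Proof. by rewrite /f_piece; case: ifP => _; case: ifP. Qed.

Lemma fpiece_le r x : ((f_piece f Rr r x)%:E <= sr r)%E.
Proof. by apply: ereal_sup_ubound; exists x. Qed.

Lemma sr_ge0 r : (0 <= sr r)%E.
Proof. apply: le_trans (fpiece_le r 0); rewrite lee_fin; exact: fpiece_ge0. Qed.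

Lemma pw_ge0 n : 0 <= (Rr + n%:R) ^+ d.-1.
Proof. by apply: exprn_ge0; apply: addr_ge0; [exact: ltW (lt_trans ltr01 Rr1)|exact: ler0n]. Qed.

Lemma sr_fin r : sr r \is a fin_num.
Proof.
rewrite ge0_fin_numE ?sr_ge0 //.
have Rp : 0 < Rr + r%:R by apply: ltr_wpDr; [exact: ler0n|exact: lt_trans Rr1].
have term : (((Rr + r%:R) ^+ d.-1)%:E * sr r < +oo)%E.
  apply: le_lt_trans Hfin.
  apply: le_trans (nneseries_lim_ge r.+1 _); last first.
    by move=> n _ _; apply: mule_ge0; [rewrite lee_fin pw_ge0|exact: sr_ge0].
  rewrite big_nat_recr //=; rewrite leeDr //.
  by apply: sume_ge0 => n _; apply: mule_ge0; [rewrite lee_fin pw_ge0|exact: sr_ge0].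
rewrite ltNge leye_eq; apply/negP => /eqP srE; move: term.
by rewrite srE gt0_muley ?lte_fin ?exprn_gt0 // ltxx.
Qed.

Definition tr r : R := fine (sr r).

Lemma tr_ge0 r : 0 <= tr r.
Proof. by rewrite /tr fine_ge0 // sr_ge0. Qed.

Lemma enorm_coord (x : V) i : `|x ord0 i| <= enorm x.
Proof.
rewrite /enorm -sqrtr_sqr ler_wsqrtr //.
by rewrite (bigD1 i) //= lerDl; apply: sumr_ge0 => j _; exact: sqr_ge0.
Qed.

Lemma enorm_ge0 (x : V) : 0 <= enorm x.
Proof. exact: sqrtr_ge0. Qed.

Lemma f_cover (x : V) : exists r, f x <= tr r /\ cube r x.
Proof.
have Rr0 : 0 < Rr by exact: lt_trans Rr1.
have hp : forall r, f_piece f Rr r x = f x -> f x <= tr r.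
  by move=> r h; rewrite -lee_fin /tr fineK ?sr_fin // -h fpiece_le.
have hc : forall r, enorm x <= Rr + r%:R -> cube r x.
  move=> r h i; rewrite !mxE; have := enorm_coord x i.
  rewrite ler_norml => /andP[h1 h2]; apply/andP; split; lra.
case: (lerP (enorm x) Rr) => hx.
  exists 0%N; split; last by apply: hc; rewrite addr0.
  by apply: hp; rewrite /f_piece eqxx hx.
have exP : exists n, enorm x <= Rr + n%:R.
  exists (Num.Def.archi_bound (enorm x)).
  have := archi_boundP (enorm_ge0 x); lra.
case: (ex_minnP exP) => n hn nmin.
exists n; split; last exact: hc.
apply: hp; rewrite /f_piece.
case: n hn nmin => [|n] hn nmin; first by rewrite addr0 in hn; lra.
rewrite /= hn andbT ifT //.
case: (lerP (enorm x) (Rr + n%:R)) => h.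
  by have := nmin _ h; rewrite ltnn.
by rewrite -natr1; lra.
Qed.


Definition Ssum : \bar R :=
  (\sum_(0 <= r <oo) (((Rr + r%:R) ^+ d.-1)%:E * sup_fun (f_piece f Rr r)))%E.

Lemma Ssum_fin : Ssum \is a fin_num.
Proof.
rewrite ge0_fin_numE //; apply: nneseries_ge0 => n _ _.
by apply: mule_ge0; [rewrite lee_fin pw_ge0|exact: sr_ge0].
Qed.

Lemma mu_bound (S : set V) (mS : measurable S) (B : R) (B0 : 0 <= B)
  (hS : forall r, (lam (S `&` cube r) <= (B * (Rr + r%:R) ^+ d.-1)%:E)%E) :
  (dmeasure lam f S <= (B * fine Ssum)%:E)%E.
Proof.
pose F x := (\sum_(0 <= r <oo) ((tr r * \1_(cube r) x)%:E))%E.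
have mc r : measurable (cube r) by exact: box_meas.
have hterm0 : forall r x, (0 <= (tr r * \1_(cube r) x)%:E)%E.
  by move=> r x; rewrite lee_fin mulr_ge0 // ?tr_ge0 // indicE.
have mterm : forall r, measurable_fun S (fun x => (tr r * \1_(cube r) x)%:E).
  move=> r; apply/measurable_EFinP; apply: measurable_funM.
    exact: measurable_cst.
  exact: measurable_indic.
have Fm : measurable_fun S F.
  exact: (@ge0_emeasurable_sum _ _ _ _ (fun r x => (tr r * \1_(cube r) x)%:E) xpredT).
rewrite /dmeasure.
apply: (@le_trans _ _ (\int[lam]_(x in S) F x)%E).
  apply: ge0_le_integral => //.
  - by move=> x _; rewrite lee_fin.
  - by apply/measurable_EFinP; exact: measurable_funS fm.
  move=> x _; have [r [hr hc]] := f_cover x.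
  apply: le_trans (nneseries_lim_ge r.+1 _); last by move=> n _ _; exact: hterm0.
  rewrite big_nat_recr //= indicE mem_set // mulr1.
  by rewrite -[X in (X <= _)%E]add0e leeD // ?lee_fin // sume_ge0.
rewrite (integral_nneseries _ mS mterm); last by move=> n x _; exact: hterm0.
apply: (@le_trans _ _ (\sum_(0 <= r <oo) (B%:E * (((Rr + r%:R) ^+ d.-1)%:E * sup_fun (f_piece f Rr r))))%E).
  apply: lee_nneseries; first by move=> n _ _; apply: integral_ge0 => x _; exact: hterm0.
  move=> r _.
  rewrite (integralZl_indic _ (fun _ => cube r)) //; last first.
    by move=> h; have := tr_ge0 r; rewrite leNgt h.
  rewrite integral_indic // setIC.
  have -> : sup_fun (f_piece f Rr r) = (tr r)%:E by rewrite /tr fineK //; exact: sr_fin.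
  apply: le_trans (lee_wpmul2l _ (hS r)) _; first by rewrite lee_fin tr_ge0.
  rewrite -!EFinM lee_fin (_ : B * (_ * tr r) = tr r * (B * (Rr + r%:R) ^+ d.-1)) //.
  ring.
rewrite nneseriesZl; last by move=> n _; apply: mule_ge0; [rewrite lee_fin pw_ge0|exact: sr_ge0].
by rewrite -/Ssum -(fineK Ssum_fin) -EFinM.
Qed.

End Dens.

Lemma slab_mu {R : realType} {d : nat} (lam : {measure set 'rV[R]_d -> \bar R})
  (hlam : is_lebesgue lam) (f : 'rV[R]_d -> R) (fm : measurable_fun [set: 'rV[R]_d] f)
  (f0 : forall x, 0 <= f x) (Rr : R) (Rr1 : 1 < Rr)
  (Hfin : (\sum_(0 <= r <oo) (((Rr + r%:R) ^+ d.-1)%:E * sup_fun (f_piece f Rr r)) < +oo)%E)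
  (v : 'rV[R]_d) (k : 'I_d) (vk : v ord0 k != 0) (a b : R) (ab : a <= b) :
  (dmeasure lam f (slab v a b) <=
    ((2 ^+ d.-1 * (b - a) / `|v ord0 k|) * fine (Ssum f Rr))%:E)%E.
Proof.
have vk0 : 0 < `|v ord0 k| by rewrite normr_gt0.
apply: mu_bound => //.
- exact: slab_meas.
- by rewrite divr_ge0 // mulr_ge0 ?exprn_ge0 // subr_ge0.
move=> r.
have Rp : 0 < Rr + r%:R by apply: ltr_wpDr; [exact: ler0n|exact: lt_trans Rr1].
have pq : forall i, (const_mx (- (Rr + r%:R)) : 'rV[R]_d) ord0 i <= (const_mx (Rr + r%:R) : 'rV[R]_d) ord0 i.
  by move=> i; rewrite !mxE; lra.
have hb := @slab_box _ _ lam hlam v k vk a b ab _ _ pq.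
apply: le_trans hb _.
rewrite lee_fin.
have -> : Vp k (const_mx (- (Rr + r%:R))) (const_mx (Rr + r%:R)) = (2 * (Rr + r%:R)) ^+ d.-1.
  have c0 : 2 * (Rr + r%:R) != 0 by rewrite mulf_neq0 // gt_eqF.
  apply: (mulfI c0).
  have h1 : \prod_(l < d) (2 * (Rr + r%:R)) = (2 * (Rr + r%:R)) ^+ d.
    by rewrite prodr_const card_ord.
  have h2 : \prod_(l < d) (2 * (Rr + r%:R)) =
      2 * (Rr + r%:R) * Vp k (const_mx (- (Rr + r%:R))) (const_mx (Rr + r%:R)).
    rewrite (bigD1 k) //=; congr (_ * _).
    by apply: eq_bigr => l _; rewrite !mxE; ring.
  rewrite -h2 h1 -exprS prednK //.
  exact: (leq_ltn_trans (leq0n k) (ltn_ord k)).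
rewrite exprMn (_ : 2 ^+ d.-1 * (b - a) / `|v ord0 k| * (Rr + r%:R) ^+ d.-1 =
  2 ^+ d.-1 * (Rr + r%:R) ^+ d.-1 * (b - a) / `|v ord0 k|) //.
ring.
Qed.

Section Lag.
Context {R : realType} {d : nat}.
Local Notation V := ('rV[R]_d).

Lemma enorm_sqr (x : V) : enorm x ^+ 2 = \sum_(l < d) x ord0 l ^+ 2.
Proof. by rewrite /enorm sqr_sqrtr // sumr_ge0 // => l _; exact: sqr_ge0. Qed.

Definition kap (yi yj : V) : R := \sum_(l < d) (yi ord0 l ^+ 2 - yj ord0 l ^+ 2) / 2.

Lemma cost_diff (x yi yj : V) :
  cost x yi - cost x yj = linf (yj - yi) x + kap yi yj.
Proof.
rewrite /cost !enorm_sqr /linf /kap -mulrBl -sumrB mulr_suml -big_split /=.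
by apply: eq_bigr => l _; rewrite !mxE; field.
Qed.

Variable M : nat.
Variables (y : 'I_M -> V) (g : 'I_M -> R) (i : 'I_M).

Lemma laguerreP x : laguerre y g i x <->
  (forall j, cost x (y i) - g i <= cost x (y j) - g j).
Proof.
rewrite /laguerre /ctransform /=; split.
  move=> h j; rewrite -lee_fin -h.
  exact: (@bigmin_le _ _ _ +oo%E j (fun j => (cost x (y j) - g j)%:E)).
move=> h; apply/eqP; rewrite eq_le; apply/andP; split.
  exact: (@bigmin_le _ _ _ +oo%E i (fun j => (cost x (y j) - g j)%:E)).
apply: le_bigmin; first exact: leey.
by move=> j _; rewrite lee_fin.
Qed.

Lemma laguerre_meas : measurable (laguerre y g i).
Proof.
have -> : laguerre y g i = \bigcap_(j in [set: 'I_M])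
   ([set: V] `&` (linf (y j - y i)) @^-1` `]-oo, g i - g j - kap (y i) (y j)]).
  apply/seteqP; split => x.
    move/laguerreP => h j _; split => //=; rewrite in_itv /=.
    have := h j; have := cost_diff x (y i) (y j); lra.
  move=> h; apply/laguerreP => j; have [_] := h j I; rewrite /= in_itv /=.
  have := cost_diff x (y i) (y j); lra.
apply: fin_bigcap_measurable; first exact: finite_finset.
by move=> j _; apply: lin_meas => //; exact: measurable_itv.
Qed.

End Lag.

Section Union.
Context {R : realType} {d : nat}.
Local Notation V := ('rV[R]_d).
Variable lam : {measure set V -> \bar R}.
Variable f : V -> R.
Hypothesis fm : measurable_fun [set: V] f.
Hypothesis f0 : forall x, 0 <= f x.

Lemma fEm (A : set V) : measurable_fun A (fun x => (f x)%:E).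
Proof. by apply/measurable_EFinP; exact: measurable_funS fm. Qed.

Lemma dm_ge0 A : (0 <= dmeasure lam f A)%E.
Proof. by apply: integral_ge0 => x _; rewrite lee_fin. Qed.

Lemma dm_sub A B : measurable A -> measurable B -> A `<=` B ->
  (dmeasure lam f A <= dmeasure lam f B)%E.
Proof.
move=> mA mB AB; apply: ge0_subset_integral => //; first exact: fEm.
by move=> x _; rewrite lee_fin.
Qed.

Lemma dm_setU A B : measurable A -> measurable B ->
  (dmeasure lam f (A `|` B) <= dmeasure lam f A + dmeasure lam f B)%E.
Proof.
move=> mA mB.
have -> : A `|` B = A `|` (B `\` A).
  apply/seteqP; split => x /=.
    by case=> [xA|xB]; [left|case: (pselect (A x)) => xA; [left|right]].
  by case=> [xA|[xB _]]; [left|right].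
have disj : [disjoint A & B `\` A].
  by rewrite disj_set2E; apply/eqP/seteqP; split => x // [xA [_ nA]].
have f0E : forall x, (A `|` B `\` A) x -> (0 <= (f x)%:E)%E.
  by move=> x _; rewrite lee_fin.
rewrite /dmeasure (ge0_integral_setU lam mA (measurableD mB mA) (fEm _) f0E disj).
apply: leeD2l; apply: ge0_subset_integral;
  [exact: measurableD|exact: mB|exact: fEm|by move=> x _; rewrite lee_fin|by move=> x []].
Qed.

Lemma dm_bigU (I : Type) (s : seq I) (F : I -> set V) :
  (forall j, measurable (F j)) ->
  (dmeasure lam f (\big[setU/set0]_(j <- s) F j) <= \sum_(j <- s) dmeasure lam f (F j))%E.
Proof.
move=> mF; elim: s => [|j s IH].
  by rewrite !big_nil /dmeasure integral_set0.
have mU : measurable (\big[setU/set0]_(k <- s) F k).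
  by apply: bigsetU_measurable => k _; exact: mF.
rewrite !big_cons; apply: le_trans (dm_setU _ _ (mF j) mU) _.
exact: leeD2l.
Qed.

End Union.

Lemma mem_bigU {T : Type} {I : eqType} (s : seq I) (F : I -> set T) (j : I) (x : T) :
  j \in s -> F j x -> (\big[setU/set0]_(k <- s) F k) x.
Proof.
move=> h Fx; elim: s h => [//|k s IH] h; rewrite big_cons.
by move: h; rewrite inE => /orP[/eqP kj|/IH h]; [left; rewrite -kj|right].
Qed.

Theorem lemmaB13 (R : realType) (d M : nat)
  (y : 'I_M -> 'rV[R]_d) (w : 'I_M -> R)
  (lam : {measure set 'rV[R]_d -> \bar R}) (f : 'rV[R]_d -> R) :
  (* nu = sum_i w_i delta_{y_i}: distinct points, positive weights summing to 1 *)
  injective y -> (forall i, 0 < w i) -> \sum_(i < M) w i = 1 ->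
  (* lam is Lebesgue measure on R^d; mu has density f w.r.t. lam *)
  is_lebesgue lam -> is_density lam f ->
  (* (B1): quadratic cost (built into [laguerre]) and finite second moment *)
  (\int[lam]_(x in [set: 'rV[R]_d]) ((enorm x) ^+ 2 * f x)%:E < +oo)%E ->
  (* (B2) *)
  (exists K : set 'rV[R]_d, compact K /\
     (dmeasure lam f K >= (1 - wmin w / 4)%:E)%E /\ PW_restricted lam f K) ->
  (* (B3) *)
  (exists Rr : R, 1 < Rr /\ exists C : R, 0 < C /\
     exists om : R -> R, is_modulus om /\
     (forall delta : R, 0 < delta ->
        (\sum_(0 <= r <oo) (((Rr + r%:R) ^+ d.-1)%:E * modcont (f_piece f Rr r) delta)
           <= (C * om delta)%:E)%E) /\
     (\sum_(0 <= r <oo) (((Rr + r%:R) ^+ d.-1)%:E * sup_fun (f_piece f Rr r)) < +oo)%E) ->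
  exists C : R, 0 < C /\
    forall (g g' : 'I_M -> R) (i : 'I_M),
      (dmeasure lam f (laguerre y g i `\` laguerre y g' i)
         <= (C * M%:R * supnorm (fun j => g j - g' j))%:E)%E.
Proof.
move=> yinj _ _ hlam [fm [f0 _]] _ _ [Rr [Rr1 [_ [_ [_ [_ [_ Hfin]]]]]]].
pose Sg := fine (Ssum f Rr).
have Sg0 : 0 <= Sg.
  apply: fine_ge0; apply: nneseries_ge0 => n _ _.
  by apply: mule_ge0; [rewrite lee_fin (@pw_ge0 _ d Rr Rr1 n)|exact: (sr_ge0 f f0)].
pose K (i j : 'I_M) : R := if [pick l | (y j - y i) ord0 l != 0] is Some l
  then 2 ^+ d * Sg / `|(y j - y i) ord0 l| else 0.
have K0 : forall i j, 0 <= K i j.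
  move=> i j; rewrite /K; case: pickP => [l _|//].
  by rewrite divr_ge0 // mulr_ge0 // exprn_ge0.
pose C := 1 + \sum_(i < M) \sum_(j < M) K i j.
have C0 : 0 < C.
  by rewrite /C ltr_pwDl // sumr_ge0 // => i _; rewrite sumr_ge0.
exists C; split => // g g' i.
pose eps := supnorm (fun j => g j - g' j).
have epsj : forall j, `|g j - g' j| <= eps.
  by move=> j; exact: (le_bigmax _ (fun j => `|g j - g' j|) j).
have eps0 : 0 <= eps by exact: le_trans (normr_ge0 _) (epsj i).
pose a j := g' i - g' j - kap (y i) (y j).
pose b j := g i - g j - kap (y i) (y j).
pose S j := slab (y j - y i) (a j) (b j).
have mS : forall j, measurable (S j) by move=> j; exact: slab_meas.
have sub : laguerre y g i `\` laguerre y g' i `<=` \big[setU/set0]_(j <- index_enum 'I_M) S j.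
  move=> x [/laguerreP hx hnx].
  have [j hj] : exists j, cost x (y j) - g' j < cost x (y i) - g' i.
    case: (pselect (exists j, cost x (y j) - g' j < cost x (y i) - g' i)) => // nj.
    exfalso; apply: hnx; apply/laguerreP => j; rewrite leNgt; apply/negP => h.
    by apply: nj; exists j.
  apply: (mem_bigU _ _ j); first by rewrite mem_index_enum.
  have := hx j; have := cost_diff x (y i) (y j); rewrite /S /slab /a /b /= => e h1.
  apply/andP; split; lra.
apply: le_trans (dm_sub lam f fm f0 _ _ _ _ sub) _.
- by apply: measurableD; exact: laguerre_meas.
- by apply: bigsetU_measurable => j _; exact: mS.
apply: le_trans (dm_bigU lam f fm f0 _ _ _ mS) _.
apply: (@le_trans _ _ (\sum_(j <- index_enum 'I_M) ((K i j * eps)%:E))%E).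
  apply: lee_sum => j _.
  case: (lerP (b j) (a j)) => hab.
    have -> : S j = set0.
      apply/seteqP; split => x //= /andP[h1 h2]; lra.
    by rewrite /dmeasure integral_set0 lee_fin mulr_ge0.
  rewrite /K; case: pickP => [l hl|none]; last first.
    exfalso; have ji : j = i.
      apply: yinj; apply/rowP => l; apply/eqP; rewrite -subr_eq0.
      by have := none l; rewrite /= !mxE => /negbFE.
    by move: hab; rewrite /a /b ji; lra.
  have ab : a j <= b j by exact: ltW.
  apply: le_trans (slab_mu lam hlam f fm f0 Rr Rr1 Hfin _ _ hl _ _ ab) _.
  rewrite lee_fin -/Sg.
  have vl0 : 0 < `|(y j - y i) ord0 l| by rewrite normr_gt0.
  have hba : b j - a j <= 2 * eps.
    have := epsj i; have := epsj j; rewrite /a /b !ler_norml => /andP[h1 h2] /andP[h3 h4].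
    lra.
  have dpos : (0 < d)%N by exact: (leq_ltn_trans (leq0n l) (ltn_ord l)).
  have e2 : (2:R) ^+ d = 2 ^+ d.-1 * 2 by rewrite -exprSr prednK.
  rewrite e2.
  have -> : 2 ^+ d.-1 * (b j - a j) / `|(y j - y i) ord0 l| * Sg =
    (2 ^+ d.-1 * Sg / `|(y j - y i) ord0 l|) * (b j - a j) by field; rewrite gt_eqF.
  have -> : 2 ^+ d.-1 * 2 * Sg / `|(y j - y i) ord0 l| * eps =
    (2 ^+ d.-1 * Sg / `|(y j - y i) ord0 l|) * (2 * eps) by field; rewrite gt_eqF.
  apply: ler_wpM2l => //.
  by rewrite divr_ge0 // mulr_ge0 // exprn_ge0.
rewrite sumEFin lee_fin -mulr_suml.
have hM : (1:R) <= M%:R by rewrite ler1n; exact: (leq_ltn_trans (leq0n i) (ltn_ord i)).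
have hK : \sum_(j <- index_enum 'I_M) K i j <= C.
  rewrite /C; apply: le_trans (_ : \sum_(i0 < M) \sum_(j < M) K i0 j <= _); last first.
    by rewrite lerDr.
  rewrite [X in _ <= X](bigD1 i) //= -[X in X <= _]addr0; apply: lerD; first exact: lexx.
  by apply: sumr_ge0 => i0 _; exact: sumr_ge0.
apply: le_trans (ler_wpM2r eps0 hK) _.
apply: ler_wpM2r => //; rewrite -[X in X <= _]mulr1; apply: ler_wpM2l => //; exact: ltW.
Qed.
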